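(* Let $I\subset\mathbb{R}$ be an interval, $\psi:I\to\mathbb{R}$ a non-decreasing convex function, $n\ge2$, and $a=(a_1,\dots,a_n)\in I^n$ a convex sequence (i.e. $(\Delta a_i)_{i=1}^{n-1}$ non-decreasing). Let $p=(p_1,\dots,p_n)\in[0,\infty)^n$ with $P_n=\sum p_i>0$ and $\frac1{P_n}\sum_{i=1}^n p_i i<n$. Set $m=\left\lfloor \frac1{P_n}\sum_{i=1}^n p_i i\right\rfloor$ (ordinary floor) and, for integers $u<v$, $$\Phi(u,v)=\Big(\sum_{i=1}^n\frac{i-u}{v-u}p_i\Big)\psi(a_v)+\Big(\sum_{i=1}^n\frac{v-i}{v-u}p_i\Big)\psi(a_u).$$ Then $$\Phi(m,m+1)\le\sum_{i=1}^n p_i\psi(a_i)\le\Phi(1,n).$$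
   Context: For a real sequence $(x_i)$, $\Delta x_i=x_{i+1}-x_i$. *)

(* Defs.v *)
From HB Require Import structures.
From mathcomp Require Import all_boot all_order all_algebra.
From mathcomp Require Import reals.
Set Implicit Arguments. Unset Strict Implicit. Unset Printing Implicit Defensive.
Import Order.TTheory GRing.Theory Num.Theory.
Local Open Scope ring_scope.

Definition nondecreasing_on (R : realType) (I : interval R) (psi : R -> R) :=
  forall x y, x \in I -> y \in I -> x <= y -> psi x <= psi y.

Definition convex_on (R : realType) (I : interval R) (psi : R -> R) :=
  forall x y t, x \in I -> y \in I -> 0 <= t -> t <= 1 ->
    psi (t * x + (1 - t) * y) <= t * psi x + (1 - t) * psi y.

Definition convex_seq (R : realType) (n : nat) (a : nat -> R) :=
  forall i, (1 <= i)%N -> (i.+2 <= n)%N ->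
    a i.+1 - a i <= a i.+2 - a i.+1.

Definition Psum (R : realType) (n : nat) (p : nat -> R) : R :=
  \sum_(1 <= i < n.+1) p i.

Definition Phi (R : realType) (n : nat) (p a : nat -> R) (psi : R -> R)
    (u v : nat) : R :=
  (\sum_(1 <= i < n.+1) (i%:R - u%:R) / (v%:R - u%:R) * p i) * psi (a v)
  + (\sum_(1 <= i < n.+1) (v%:R - i%:R) / (v%:R - u%:R) * p i) * psi (a u).

(* Main.v *)
Require Import Defs.
From HB Require Import structures.
From mathcomp Require Import all_boot all_order all_algebra.
From mathcomp Require Import reals.
From mathcomp Require Import ring lra zify.
Import Order.TTheory GRing.Theory Num.Theory.
Local Open Scope ring_scope.

Section Aux.
Variable R : realType.

Lemma itv_between (I : interval R) x y z :
  x \in I -> y \in I -> x <= z -> z <= y -> z \in I.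
Proof.
case: I => l r; rewrite !itv_boundlr => /andP[lx _] /andP[_ yr] xz zy.
apply/andP; split.
  by apply: (le_trans lx); rewrite leBSide /=.
by apply: le_trans yr; rewrite leBSide /=.
Qed.

Lemma itv_conv (I : interval R) x y t :
  x \in I -> y \in I -> 0 <= t -> t <= 1 -> t * x + (1 - t) * y \in I.
Proof.
move=> xI yI t0 t1; case: (leP x y) => h.
  have := @itv_between I x y (t * x + (1 - t) * y) xI yI. apply; nra.
have := @itv_between I y x (t * x + (1 - t) * y) yI xI. apply; nra.
Qed.

Variables (n : nat) (a : nat -> R).
Hypothesis ca : convex_seq n a.
Let D j := a j.+1 - a j.

Lemma mono j k : (1 <= j)%N -> ((j + k).+1 <= n)%N -> D j <= D (j + k).
Proof.
move=> j1; elim: k => [|k IH] h; first by rewrite addn0.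
apply: le_trans (IH _) _; first lia.
rewrite addnS /D; apply: ca; lia.
Qed.

Lemma lo j k : (1 <= j)%N -> (j + k <= n)%N -> k%:R * D j <= a (j + k) - a j.
Proof.
move=> j1; elim: k => [|k IH] h; first by rewrite addn0 mul0r subrr.
have h1 := IH ltac:(lia).
have h2 := mono j k j1 ltac:(lia).
rewrite addnS -addn1 natrD.
have -> : a (j + k).+1 - a j = (a (j + k) - a j) + D (j + k) by rewrite /D; ring.
lra.
Qed.

Lemma hi j k : (1 <= j)%N -> ((j + k).+1 <= n)%N ->
  a (j + k).+1 - a j <= k.+1%:R * D (j + k).
Proof.
move=> j1; elim: k => [|k IH] h; first by rewrite addn0 mul1r.
have h1 := IH ltac:(lia).
have h2 : D (j + k) <= D (j + k).+1 by apply: ca; lia.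
rewrite addnS -[k.+2]addn1 natrD.
have -> : a (j + k).+2 - a j = (a (j + k).+1 - a j) + D (j + k).+1 by rewrite /D; ring.
have h3 : (0:R) <= k.+1%:R by [].
have := ler_wpM2l h3 h2.
lra.
Qed.

Lemma low m i : (1 <= m)%N -> (m.+1 <= n)%N -> (1 <= i <= n)%N ->
  (i%:R - m%:R) * a m.+1 + (m.+1%:R - i%:R) * a m <= a i.
Proof.
move=> m1 mn /andP[i1 iN].
case: (ltnP m i) => hmi.
  have [k ek] : exists k, i = (m + k.+1)%N by exists (i - m.+1)%N; lia.
  subst i.
  have := lo m k.+1 m1 iN; rewrite /D natrD -[m.+1]addn1 natrD.
  move: (k.+1)%:R => K; nra.
have [k ek] : exists k, m = (i + k)%N by exists (m - i)%N; lia.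
subst m.
have := hi i k i1 ltac:(lia); rewrite /D -[(i + k).+1]addn1.
rewrite !natrD -[k.+1]addn1 natrD.
move: (k%:R) => K; nra.
Qed.

Lemma chord i : (2 <= n)%N -> (1 <= i <= n)%N ->
  (n%:R - i%:R) * (a i - a 1) <= (i%:R - 1) * (a n - a i).
Proof.
move=> n2 /andP[i1 iN].
case: (ltngtP i 1) => [|hi1|->]; first lia; last by rewrite !subrr mulr0 mul0r.
case: (ltngtP i n) => [hin||->]; last 2 first; first lia.
  by rewrite !subrr mulr0 mul0r.
have [j ej] : exists j, i = j.+2 by exists (i - 2)%N; lia.
subst i.
have [l el] : exists l, n = (j.+2 + l.+1)%N by exists (n - j.+3)%N; lia.
have c1 : (1 + j).+1 = j.+2 by lia.
have c2 : (j.+1 + l.+2 = j.+2 + l.+1)%N by lia.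
have e1 : ((1 + j).+1 <= n)%N by lia.
have e2 : (j.+1 + l.+2 <= n)%N by lia.
have hA := hi 1 j (isT : (1 <= 1)%N) e1.
have hB := lo j.+1 l.+2 (isT : (1 <= j.+1)%N) e2.
move: hA hB; rewrite /D c1 c2 -el el.
rewrite -(addn1 j) -(addn1 (j + 1)) -(addn1 l) -(addn1 (l + 1)) !natrD.
have -> : (1 + j)%N = (j + 1)%N by lia.
move: (j%:R) (l%:R) (a (j + 1 + 1)) (a (j + 1)) (a 1) (a (j + 1 + 1 + (l + 1)))
  (ler0n R j) (ler0n R l) => J L x y z w hJ hL h1 h2.
nra.
Qed.
End Aux.

Theorem corollary4p4 (R : realType) (I : interval R) (psi : R -> R)
    (n : nat) (a p : nat -> R) :
  nondecreasing_on I psi -> convex_on I psi ->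
  (2 <= n)%N ->
  (forall i, (1 <= i <= n)%N -> a i \in I) ->
  convex_seq n a ->
  (forall i, (1 <= i <= n)%N -> 0 <= p i) ->
  0 < Psum n p ->
  (Psum n p)^-1 * (\sum_(1 <= i < n.+1) p i * i%:R) < n%:R ->
  let m := `|Num.floor ((Psum n p)^-1 * (\sum_(1 <= i < n.+1) p i * i%:R))|%N in
  Phi n p a psi m m.+1 <= \sum_(1 <= i < n.+1) p i * psi (a i)
  /\ \sum_(1 <= i < n.+1) p i * psi (a i) <= Phi n p a psi 1 n.
Proof.
move=> hmon hconv n2 aI ca p0 P0 cn m.
have PS : Psum n p <= \sum_(1 <= i < n.+1) p i * i%:R.
  rewrite /Psum; apply: ler_sum_nat => i hi.
  have hp := p0 i hi.
  have : (1 : R) <= i%:R by rewrite ler1n; case/andP: hi.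
  nra.
have c1 : 1 <= (Psum n p)^-1 * (\sum_(1 <= i < n.+1) p i * i%:R).
  by rewrite ler_pdivlMl // mulr1.
have fl1 : (1 <= Num.floor ((Psum n p)^-1 * (\sum_(1 <= i < n.+1) p i * i%:R)))%R.
  by rewrite floor_ge_int; exact: c1.
have fln : (Num.floor ((Psum n p)^-1 * (\sum_(1 <= i < n.+1) p i * i%:R)) < n%:Z)%R.
  rewrite -(ltr_int R); apply: le_lt_trans (floor_le _) _; exact: cn.
have hm1 : (1 <= m)%N by rewrite /m; lia.
have hmn : (m.+1 <= n)%N by rewrite /m; lia.
have hn1 : (0 : R) < n%:R - 1.
  have : (2%:R : R) <= n%:R by rewrite ler_nat.
  lra.
split.
- have cg : convex_seq n (fun i => psi (a i)).
    move=> i i1 i2.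
    have h := ca i i1 i2.
    have Ii : a i \in I by apply: aI; lia.
    have Ii2 : a i.+2 \in I by apply: aI; lia.
    have Ii1 : a i.+1 \in I by apply: aI; lia.
    have t0 : (0 : R) <= 2^-1 by rewrite invr_ge0 ler0n.
    have t1 : (2^-1 : R) <= 1 by rewrite invf_le1 // ler1n.
    have hc := hconv _ _ _ Ii Ii2 t0 t1.
    have hm := hmon _ _ Ii1 (@itv_conv R I _ _ _ Ii Ii2 t0 t1).
    have : a i.+1 <= 2^-1 * a i + (1 - 2^-1) * a i.+2 by lra.
    move/hm => hm'.
    lra.
  rewrite /Phi.
  have h1 : (m.+1%:R - m%:R : R) = 1 by rewrite -addn1 natrD; ring.
  rewrite h1 !mulr_suml -big_split /=.
  apply: ler_sum_nat => i hi.
  have L := @low R n (fun i => psi (a i)) cg m i hm1 hmn hi.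
  have := ler_wpM2l (p0 i hi) L.
  simpl; lra.
- rewrite /Phi !mulr_suml -big_split /=.
  apply: ler_sum_nat => i hi.
  have hin : (i%:R : R) <= n%:R by rewrite ler_nat; case/andP: hi.
  have hi1 : (1 : R) <= i%:R by rewrite ler1n; case/andP: hi.
  set t := (i%:R - 1%:R) / (n%:R - 1%:R).
  have e1 : ((n%:R - i%:R) / (n%:R - 1%:R) : R) = 1 - t.
    by rewrite /t; field; exact: lt0r_neq0.
  have ht0 : 0 <= t by rewrite /t; apply: divr_ge0; lra.
  have ht1 : t <= 1 by rewrite /t ler_pdivrMr // mul1r; lra.
  have In : a n \in I by apply: aI; lia.
  have I1 : a 1 \in I by apply: aI; lia.
  have key : psi (a i) <= t * psi (a n) + (1 - t) * psi (a 1).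
    apply: le_trans (hconv _ _ _ In I1 ht0 ht1).
    apply: hmon (aI i hi) (@itv_conv R I _ _ _ In I1 ht0 ht1) _.
    have K := @chord R n a ca i n2 hi.
    rewrite -(ler_pM2l hn1).
    have -> : (n%:R - 1) * (t * a n + (1 - t) * a 1)
        = (i%:R - 1) * a n + (n%:R - i%:R) * a 1.
      by rewrite /t; field; exact: lt0r_neq0.
    lra.
  rewrite e1.
  have := ler_wpM2l (p0 i hi) key.
  lra.
Qed.
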